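(* Let $h:\mathcal{X}\to\mathcal{Y}$ be such that for every $\lambda\ge0$ the function $(x,x')\mapsto d_{\mathcal{Y}}(h(x),h(x'))-\lambda d_{\mathcal{X}}(x,x')$ is continuous on $\mathcal{X}\times\mathcal{X}$. Then \[ R(h)=\inf_{\lambda\ge0}\Big\{\lambda\epsilon+\mathbf{E}_{P_X}\big[r_\lambda(h,X)\big]\Big\},\qquad r_\lambda(h,x)=\sup_{x'\in\mathcal{X}}\big\{d_{\mathcal{Y}}(h(x),h(x'))-\lambda d_{\mathcal{X}}(x,x')\big\}. \]
   Context: $(\mathcal{X},d_{\mathcal{X}})$ and $(\mathcal{Y},d_{\mathcal{Y}})$ are complete separable metric spaces; $P_X$ is a Borel probability distribution on $\mathcal{X}$ and $\epsilon>0$. The fair regularizer is \[ R(h)=\sup\Big\{\mathbf{E}_\Pi[d_{\mathcal{Y}}(h(X),h(X'))]\;:\;\Pi\in\Delta(\mathcal{X}\times\mathcal{X}),\ \mathbf{E}_\Pi[d_{\mathcal{X}}(X,X')]\le\epsilon,\ \Pi(\cdot,\mathcal{X})=P_X\Big\}, \] where $\Delta(\mathcal{X}\times\mathcal{X})$ is the set of Borel probability measures on $\mathcal{X}\times\mathcal{X}$, $(X,X')\sim\Pi$, and $\Pi(\cdot,\mathcal{X})$ denotes the first marginal of $\Pi$. *)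

(* Defs.v *)
From HB Require Import structures.
From mathcomp Require Import all_boot all_order all_algebra.
From mathcomp Require Import all_classical all_reals all_analysis.
Set Implicit Arguments. Unset Strict Implicit. Unset Printing Implicit Defensive.
Import Order.TTheory GRing.Theory Num.Theory.
Local Open Scope classical_set_scope.
Local Open Scope ring_scope.

Section MetricDefs.
Context {R : realType}.

Definition is_metric {T : Type} (d : T -> T -> R) : Prop :=
  [/\ (forall x y, d x y = 0 <-> x = y),
      (forall x y, d x y = d y x) &
      (forall x y z, d x z <= d x y + d y z)].

Definition metric_complete {T : Type} (d : T -> T -> R) : Prop :=
  forall u : nat -> T,
    (forall e : R, 0 < e -> exists N, forall m n, (N <= m)%N -> (N <= n)%N ->
        d (u m) (u n) < e) ->
    exists l, forall e : R, 0 < e -> exists N, forall n, (N <= n)%N -> d (u n) l < e.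

Definition metric_separable {T : Type} (d : T -> T -> R) : Prop :=
  exists D : set T, countable D /\
    forall x (e : R), 0 < e -> exists2 y, D y & d x y < e.

Definition metric_open {T : Type} (d : T -> T -> R) : set (set T) :=
  [set A | forall x, A x -> exists2 r : R, 0 < r & forall y, d x y < r -> A y].

Definition metric_continuous2 {T : Type} (d : T -> T -> R) (f : T -> T -> R) : Prop :=
  forall x x' (e : R), 0 < e -> exists2 del : R, 0 < del &
    forall y y', d x y < del -> d x' y' < del -> `|f y y' - f x x'| < e.

End MetricDefs.

Local Open Scope ereal_scope.

Definition fair_regularizer {R : realType} {dd : measure_display}
  {X : measurableType dd} {Y : Type}
  (dX : X -> X -> R) (dY : Y -> Y -> R) (PX : probability X R) (eps : R)
  (h : X -> Y) : \bar R :=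
  ereal_sup [set v | exists Pi : probability (X * X)%type R,
     [/\ \int[Pi]_z (dX z.1 z.2)%:E <= eps%:E,
         (forall A : set X, measurable A -> Pi (A `*` setT) = PX A) &
         v = \int[Pi]_z (dY (h z.1) (h z.2))%:E]].

Definition r_lambda {R : realType} {X Y : Type}
  (dX : X -> X -> R) (dY : Y -> Y -> R) (h : X -> Y) (lam : R) (x : X) : \bar R :=
  ereal_sup [set ((dY (h x) (h x') - lam * dX x x')%R)%:E | x' in [set: X]].

(* Main.v *)
From HB Require Import structures.
Require Import Defs.
From mathcomp Require Import all_boot all_order all_algebra.
From mathcomp Require Import all_classical all_reals all_analysis.
From mathcomp Require Import measurable_realfun.
Import Order.TTheory GRing.Theory Num.Theory.
Local Open Scope classical_set_scope.
Local Open Scope ring_scope.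

From mathcomp Require Import ring lra.

Section Mix.
Local Open Scope ereal_scope.

Lemma mixture (R : realType) (d : measure_display) (T : measurableType d)
  (P1 P2 : probability T R) (a : R) (a0 : (0 <= a)%R) (a1 : (a <= 1)%R) :
  exists P : probability T R,
   (forall A, measurable A -> P A = (a%:E * P1 A + (1 - a)%R%:E * P2 A)%E) /\
   (forall f : T -> \bar R, measurable_fun setT f -> (forall x, 0 <= f x)%E ->
     \int[P]_x f x = (a%:E * \int[P1]_x f x + (1 - a)%R%:E * \int[P2]_x f x)%E).
Proof.
have b0 : (0 <= 1 - a)%R by rewrite subr_ge0.
pose mu := measure_add (mscale (NngNum a0) P1) (mscale (NngNum b0) P2).
have muE A : mu A = a%:E * P1 A + (1 - a)%R%:E * P2 A.
  by rewrite /mu measure_addE.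
have mu1 : mu setT = 1%E.
  rewrite muE (probability_setT P1) (probability_setT P2) !mule1 -EFinD.
  by rewrite addrC subrK.
pose P := mnormalize mu P1.
have PE A : P A = mu A.
  rewrite /P /mnormalize /=; case: ifPn => [/orP[] /eqP h|_].
  - have h' : mu setT = 0 := h.
    by move: h'; rewrite mu1 => /eqP; rewrite onee_eq0.
  - have h' : mu setT = +oo := h.
    by move: h'; rewrite mu1.
  change (mu A * (fine (mu setT))^-1%:E = mu A).
  by rewrite mu1 /= invr1 mule1.
exists P; split.
  by move=> A mA; exact: (etrans (PE A) (muE A)).
move=> f mf f0.
rewrite (eq_measure_integral mu); last by move=> A mA _; exact: PE.
rewrite ge0_integral_measure_add // !ge0_integral_mscale //.
Qed.
End Mix.
Section Proof2p3.
Context (R : realType) (dd : measure_display) (X : measurableType dd)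
  (Y : Type) (dX : X -> X -> R) (dY : Y -> Y -> R)
  (hdX : is_metric dX) (hdY : is_metric dY) (hsX : metric_separable dX)
  (hBorel : (@measurable dd X) = <<s metric_open dX >>).

Lemma dXxx x : dX x x = 0. Proof. by case: hdX => h _ _; apply/h. Qed.
Lemma dXC x y : dX x y = dX y x. Proof. by case: hdX. Qed.
Lemma dXtri x y z : dX x z <= dX x y + dX y z. Proof. by case: hdX. Qed.
Lemma dX_ge0 x y : 0 <= dX x y.
Proof.
have := dXtri x y x; rewrite dXxx (dXC y x) -mulr2n.
by rewrite pmulrn_lge0.
Qed.

Lemma ball_meas x r : measurable [set y | dX x y < r].
Proof.
rewrite hBorel; apply: sub_sigma_algebra => y /= hy.
exists (r - dX x y); first by rewrite subr_gt0.
move=> z hz; rewrite /=; apply: (le_lt_trans (dXtri x y z)).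
by rewrite -ltrBrDl.
Qed.

Lemma dense_seq : exists dn : nat -> X,
  forall x (e : R), 0 < e -> exists n, dX x (dn n) < e.
Proof.
case: hsX => D [/countable_injP [f finj] Ddense].
pose dn n := match pselect (exists y, D y /\ f y = n) with
  | left e => projT1 (cid e) | right _ => point end.
exists dn => x e e0; have [y Dy xy] := Ddense x e e0.
exists (f y); rewrite /dn; case: pselect => [ex|]; last first.
  by move=> nex; exfalso; apply: nex; exists y.
case: (cid ex) => y' [Dy' fy'] /=.
by rewrite (finj y' y) ?inE.
Qed.

Context (h : X -> Y) (PX : probability X R)
  (hcont : forall lam : R, 0 <= lam ->
     metric_continuous2 dX (fun x x' => dY (h x) (h x') - lam * dX x x')).

Section WithDense.
Context (dn : nat -> X) (hdn : forall x (e : R), 0 < e -> exists n, dX x (dn n) < e).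

Lemma meas2 (f : X -> X -> R) : metric_continuous2 dX f ->
  measurable_fun setT (fun z : X * X => f z.1 z.2).
Proof.
move=> fc; apply: (measurability _ (RGenOInfty.measurableE R)) => //.
move=> /= _ [_ [a ->] <-]; rewrite setTI preimage_itvoy.
pose rr (k : nat) : R := k.+1%:R^-1.
pose cond n m k := forall y y', dX (dn n) y < rr k -> dX (dn m) y' < rr k ->
   a < f y y'.
rewrite [X in measurable X](_ : _ = \bigcup_n \bigcup_m \bigcup_k
  (if `[< cond n m k >] then [set y | dX (dn n) y < rr k] `*`
      [set y | dX (dn m) y < rr k] else set0)).
  apply: bigcupT_measurable => n; apply: bigcupT_measurable => m.
  apply: bigcupT_measurable => k; case: ifP => _ //.
  by apply: measurableX; exact: ball_meas.
apply/seteqP; split => [[x x'] /= hz|[y y'] [n _ [m _ [k _]]]].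
  have [del del0 hdel] := fc x x' (f x x' - a) ltac:(by rewrite subr_gt0).
  have [k] := ltr_add_invr (divr_gt0 del0 (ltr0n R 2)); rewrite add0r => hk.
  have rk0 : 0 < rr k by rewrite /rr invr_gt0.
  have [n hn] := hdn x _ rk0; have [m hm] := hdn x' _ rk0.
  have hl : forall z w, dX z (dn n) < rr k -> dX (dn n) w < rr k -> dX z w < del.
    move=> z w h1 h2; apply: (le_lt_trans (dXtri z (dn n) w)).
    by rewrite (splitr del) ltrD // (lt_trans _ hk).
  have hl' : forall z w, dX z (dn m) < rr k -> dX (dn m) w < rr k -> dX z w < del.
    move=> z w h1 h2; apply: (le_lt_trans (dXtri z (dn m) w)).
    by rewrite (splitr del) ltrD // (lt_trans _ hk).
  exists n => //; exists m => //; exists k => //.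
  have hc : cond n m k.
    move=> y y' hy hy'; have := hdel y y' (hl _ _ hn hy) (hl' _ _ hm hy').
    rewrite ltr_norml => /andP[+ _]; rewrite ltrBrDl opprB addrC subrK.
    by [].
  by rewrite asboolT //=; split => /=; rewrite dXC.
case: ifPn => // /asboolP hc [/= h1 h2]; exact: hc.
Qed.

Definition gg x y := dY (h x) (h y).
Definition phi lam x y := gg x y - lam * dX x y.

Lemma gg_xx x : gg x x = 0. Proof. by case: hdY => H _ _; apply/H. Qed.
Lemma gg_ge0 x y : 0 <= gg x y.
Proof.
case: hdY => H1 H2 H3; have := H3 (h x) (h y) (h x).
rewrite (H2 (h y) (h x)) -mulr2n; have -> : dY (h x) (h x) = 0 by apply/H1.
by rewrite pmulrn_lge0.
Qed.
Lemma phi_xx lam x : phi lam x x = 0.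
Proof. by rewrite /phi gg_xx dXxx mulr0 subr0. Qed.

Lemma phi_cont lam : 0 <= lam -> metric_continuous2 dX (phi lam).
Proof. exact: hcont. Qed.

Lemma gg_cont : metric_continuous2 dX gg.
Proof.
move=> x x' e e0; have [del del0 H] := phi_cont 0 (lexx 0) x x' e e0.
exists del => // y y' h1 h2; have := H y y' h1 h2.
by rewrite /phi !mul0r !subr0.
Qed.

Lemma dX_cont : metric_continuous2 dX dX.
Proof.
move=> x x' e e0; exists (e / 2); first by rewrite divr_gt0.
move=> y y' h1 h2; rewrite ltr_norml.
have t1 := dXtri y x x'; have t2 := dXtri y x' y'; have t3 := dXtri x y x'.
have t4 := dXtri y y' x'; rewrite (dXC y x) in t1; rewrite (dXC y' x') in t4.
apply/andP; split; lra.
Qed.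

Lemma mcomp (f : X -> X -> R) (T1 T2 : X -> X) : metric_continuous2 dX f ->
  measurable_fun setT T1 -> measurable_fun setT T2 ->
  measurable_fun setT (fun x => f (T1 x) (T2 x)).
Proof.
move=> fc m1 m2.
apply: (@measurableT_comp _ _ _ _ _ _ (fun z : X * X => f z.1 z.2) _
  (fun x => (T1 x, T2 x))); [exact: meas2 | exact: measurable_fun_pair].
Qed.
Arguments mcomp {f T1 T2}.
Definition mid := @measurable_id _ X setT.
Definition mcst (y : X) := @measurable_cst _ _ X X setT y.

Section Sel.
Context (lam : R) (lam0 : 0 <= lam).

Fixpoint B (k n : nat) (x : X) : X :=
  if n is n'.+1 then
    if (dX x (dn n') <= k%:R) && (phi lam x (B k n' x) < phi lam x (dn n'))
    then dn n' else B k n' x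
  else x.

Lemma Bd k n x : dX x (B k n x) <= k%:R.
Proof.
elim: n => [|n IH] /=; first by rewrite dXxx.
by case: ifP => // /andP[].
Qed.

Lemma Bge0 k n x : 0 <= phi lam x (B k n x).
Proof.
elim: n => [|n IH] /=; first by rewrite phi_xx.
by case: ifP => // /andP[_ H]; exact: le_trans IH (ltW H).
Qed.

Lemma Bmono k n x : phi lam x (B k n x) <= phi lam x (B k n.+1 x).
Proof. by rewrite /=; case: ifP => // /andP[_ /ltW]. Qed.

Lemma Bub k n m x : (m < n)%N -> dX x (dn m) <= k%:R ->
  phi lam x (dn m) <= phi lam x (B k n x).
Proof.
elim: n => [//|n IH]; rewrite ltnS leq_eqVlt => /orP[/eqP ->|mn] hd.
  rewrite /=; rewrite hd /=; case: ltP => // /negP; rewrite -leNgt //.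
by apply: le_trans (Bmono _ _ _); exact: IH.
Qed.

Lemma Bcase k n x : B k n x = x \/
  exists2 m, (m < n)%N & (dX x (dn m) <= k%:R /\ B k n x = dn m).
Proof.
elim: n => [|n IH]; first by left.
rewrite /=; case: ifP => [/andP[H _]|_].
  by right; exists n.
case: IH => [->|[m mn hm]]; first by left.
by right; exists m => //; exact: ltnW.
Qed.

Definition vk k x := phi lam x (B k k x).

Lemma vk_ge0 k x : 0 <= vk k x. Proof. exact: Bge0. Qed.

Lemma vk_mono x : nondecreasing_seq (fun k => (vk k x)%:E).
Proof.
apply/nondecreasing_seqP => k; rewrite lee_fin /vk.
case: (Bcase k k x) => [->|[m mk [hm ->]]]; first by rewrite phi_xx Bge0.
apply: Bub; first exact: ltn_trans mk (ltnSn k).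
by apply: (le_trans hm); rewrite ler_nat.
Qed.

Lemma mB k n : measurable_fun setT (B k n).
Proof.
elim: n => [|n IH] /=; first exact: mid.
apply: measurable_fun_ifT.
- apply: measurable_and.
  + apply: measurable_fun_ler; last exact: measurable_cst.
    exact: (mcomp dX_cont mid (mcst (dn n))).
  + apply: measurable_fun_ltr.
    * exact: (mcomp (phi_cont lam lam0) mid IH).
    * exact: (mcomp (phi_cont lam lam0) mid (mcst (dn n))).
- exact: measurable_cst.
- exact: IH.
Qed.

Lemma mvk k : measurable_fun setT (vk k).
Proof. exact: (mcomp (phi_cont lam lam0) mid (mB k k)). Qed.


Lemma r_supE x :
  r_lambda dX dY h lam x = ereal_sup (range (fun k => (vk k x)%:E)).
Proof.
apply/eqP; rewrite eq_le; apply/andP; split; last first.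
  apply: ge_ereal_sup => _ [k _ <-]; apply: ereal_sup_ubound.
  by exists (B k k x).
apply: ge_ereal_sup => _ [x' _ <-]; apply/lee_addgt0Pr => e e0.
have [del del0 Hc] := phi_cont lam lam0 x x' e e0.
have [n hn] := hdn x' del del0.
pose K := maxn n.+1 (Num.bound (dX x (dn n))).
have hK : dX x (dn n) <= K%:R.
  apply: ltW; apply: (lt_le_trans (archi_boundP (dX_ge0 _ _))).
  by rewrite ler_nat leq_maxr.
have nK : (n < K)%N by rewrite leq_maxl.
have := Hc x (dn n) ltac:(by rewrite dXxx) hn; rewrite ltr_norml => /andP[H1 _].
have h1 := Bub K K n x nK hK.
have h2 : ((vk K x)%:E <= ereal_sup (range (fun k => (vk k x)%:E)))%E.
  by apply: ereal_sup_ubound; exists K.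
apply: le_trans (leeD2r _ h2); rewrite -EFinD lee_fin.
have : phi lam x x' <= phi lam x (dn n) + e by lra.
move=> H; apply: (le_trans H); rewrite lerD2r; exact: h1.
Qed.

Lemma r_cvg x : (fun k => (vk k x)%:E) @ \oo --> r_lambda dX dY h lam x.
Proof. rewrite r_supE; exact: ereal_nondecreasing_cvgn (vk_mono x). Qed.

Lemma mr : measurable_fun setT (r_lambda dX dY h lam).
Proof.
apply: (@emeasurable_fun_cvg _ X R setT (fun k x => (vk k x)%:E)).
  by move=> k; apply/measurable_EFinP; exact: mvk.
by move=> x _; exact: r_cvg.
Qed.

Lemma r_ge0 x : (0 <= r_lambda dX dY h lam x)%E.
Proof. rewrite r_supE; apply: le_trans (ereal_sup_ubound _); last by exists 0%N.
by rewrite lee_fin vk_ge0. Qed.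

Lemma phi_le_r x y : ((phi lam x y)%:E <= r_lambda dX dY h lam x)%E.
Proof. by apply: ereal_sup_ubound; exists y. Qed.
End Sel.

Section Couplings.
Local Open Scope ereal_scope.

Definition Cst (Pi : probability (X * X)%type R) := \int[Pi]_z (dX z.1 z.2)%:E.
Definition Gst (Pi : probability (X * X)%type R) := \int[Pi]_z (gg z.1 z.2)%:E.
Definition coupling (Pi : probability (X * X)%type R) :=
  forall A : set X, measurable A -> Pi (A `*` setT) = PX A.

Lemma m2E (f : X -> X -> R) : metric_continuous2 dX f ->
  measurable_fun setT (fun z : X * X => (f z.1 z.2)%:E).
Proof. by move=> fc; apply/measurable_EFinP; exact: meas2. Qed.

Lemma Cst_ge0 Pi : 0 <= Cst Pi.
Proof. by apply: integral_ge0 => z _; rewrite lee_fin dX_ge0. Qed.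
Lemma Gst_ge0 Pi : 0 <= Gst Pi.
Proof. by apply: integral_ge0 => z _; rewrite lee_fin gg_ge0. Qed.

Lemma push (T : X -> X) (mT : measurable_fun setT T) :
  exists Pi : probability (X * X)%type R, coupling Pi /\
   forall f : X -> X -> R, metric_continuous2 dX f -> (forall x y, (0 <= f x y)%R) ->
     \int[Pi]_z (f z.1 z.2)%:E = \int[PX]_x (f x (T x))%:E.
Proof.
have mF : measurable_fun setT (fun x => (x, T x)) by exact: measurable_fun_pair.
pose F : {mfun X >-> (X * X)%type} := HB.pack (fun x => (x, T x))
  (isMeasurableFun.Build _ _ _ _ _ mF).
exists (distribution PX F); split.
  move=> A mA; rewrite /distribution /pushforward /=; congr (PX _).
  by apply/seteqP; split => x //= [].
move=> f fc f0; rewrite /distribution ge0_integral_pushforward //.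
- exact: m2E.
- by move=> z _; rewrite lee_fin.
Qed.

Lemma weak (Pi : probability (X * X)%type R) (lam : R) (lam0 : (0 <= lam)%R) :
  coupling Pi ->
  Gst Pi <= lam%:E * Cst Pi + \int[PX]_x r_lambda dX dY h lam x.
Proof.
move=> cP.
have mfst : measurable_fun setT (@fst X X) by exact: measurable_fst.
have -> : \int[PX]_x r_lambda dX dY h lam x =
          \int[Pi]_z r_lambda dX dY h lam z.1.
  rewrite (eq_measure_integral (pushforward Pi fst)); last first.
    move=> A mA _; rewrite /pushforward /= -(cP A mA); congr (Pi _).
    by apply/seteqP; split => -[x y] /=; first [by case | by move=> ?; split].
  rewrite ge0_integral_pushforward //.
  - exact: mr.
  - by move=> x _; exact: r_ge0.
rewrite /Cst -ge0_integralZl_EFin //; last exact: m2E dX_cont.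
rewrite addeC -ge0_integralD //; last 4 first.
- by move=> z _; exact: r_ge0.
- exact: (measurableT_comp (mr lam lam0) mfst).
- by move=> z _; rewrite -EFinM lee_fin mulr_ge0 // dX_ge0.
- by apply/measurable_EFinP; apply: measurable_funM;
    [exact: measurable_cst | exact: meas2 dX_cont].
rewrite /Gst; apply: ge0_le_integral => //.
- by move=> z _; rewrite lee_fin gg_ge0.
- exact: m2E gg_cont.
- apply: emeasurable_funD; first exact: (measurableT_comp (mr lam lam0) mfst).
  by apply/measurable_EFinP; apply: measurable_funM;
    [exact: measurable_cst | exact: meas2 dX_cont].
  move=> [x y] _ /=.
  apply: (@le_trans _ _ ((phi lam x y)%:E + lam%:E * (dX x y)%:E)).
    by rewrite -EFinM -EFinD /phi subrK.
  exact: leeD2r _ (phi_le_r lam x y).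
by move=> z _; rewrite lee_fin dX_ge0.
Qed.



Lemma sel (lam : R) (lam0 : (0 <= lam)%R) (w : R) :
  w%:E < \int[PX]_x r_lambda dX dY h lam x ->
  exists Pi, coupling Pi /\ exists c : R,
    Cst Pi = c%:E /\ (w + lam * c)%:E < Gst Pi.
Proof.
move=> hw.
have mg k : measurable_fun setT (fun x => (vk lam k x)%:E).
  by apply/measurable_EFinP; exact: mvk.
have g0 k x : setT x -> 0 <= (vk lam k x)%:E.
  by move=> _; rewrite lee_fin vk_ge0.
have nd x : setT x -> nondecreasing_seq (fun k => (vk lam k x)%:E).
  by move=> _; exact: vk_mono.
have HM := @monotone_convergence _ X R PX setT measurableT
  (fun k x => (vk lam k x)%:E) mg g0 nd.
have HC := @cvg_monotone_convergence _ X R PX setT measurableT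
  (fun k x => (vk lam k x)%:E) mg g0 nd.
have rE : \int[PX]_x r_lambda dX dY h lam x =
    \int[PX]_x limn (fun k => (vk lam k x)%:E).
  by apply: eq_integral => x _; apply/esym/cvg_lim => //; exact: r_cvg.
have [k hk] : exists k, w%:E < \int[PX]_x (vk lam k x)%:E.
  case: (pselect (exists k, w%:E < \int[PX]_x (vk lam k x)%:E)) => // nex.
  exfalso; move: hw; rewrite rE HM; apply/negP; rewrite -leNgt.
  apply: lime_le; first exact: (cvgP _ HC).
  apply: nearW => n; rewrite leNgt; apply/negP => H; apply: nex; by exists n.
have [Pi [cP HPi]] := @push (B lam k k) (mB lam lam0 k k : measurable_fun setT (B lam k k)).
exists Pi; split => //.
have CE : Cst Pi = \int[PX]_x (dX x (B lam k k x))%:E.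
  by rewrite /Cst HPi //; [exact: dX_cont | exact: dX_ge0].
have Cfin : Cst Pi \is a fin_num.
  rewrite ge0_fin_numE ?Cst_ge0 // CE; apply: (@le_lt_trans _ _ (k%:R%:E)).
    apply: (@le_trans _ _ (\int[PX]_x (cst (k%:R%:E) x))).
      apply: ge0_le_integral => //.
      - by move=> x _; rewrite lee_fin dX_ge0.
      - apply/measurable_EFinP.
        exact: (mcomp dX_cont mid (mB lam lam0 k k)).
      - by move=> x _; rewrite lee_fin Bd.
    have PX1 : (PX : {measure set X -> \bar R}) setT = 1 by exact: probability_setT.
    by rewrite integral_cst // PX1 mule1.
  exact: ltry.
exists (fine (Cst Pi)); split; first by rewrite fineK.
have GE : Gst Pi = \int[PX]_x (vk lam k x)%:E +
                   lam%:E * \int[PX]_x (dX x (B lam k k x))%:E.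
  rewrite /Gst HPi; [|exact: gg_cont|exact: gg_ge0].
  have mD : measurable_fun setT (fun x => (dX x (B lam k k x))%:E).
    by apply/measurable_EFinP; exact: (mcomp dX_cont mid (mB lam lam0 k k)).
  have D0 : forall x, setT x -> 0 <= (dX x (B lam k k x))%:E.
    by move=> x _; rewrite lee_fin dX_ge0.
  rewrite -(ge0_integralZl_EFin PX measurableT D0 mD lam0).
  have mD2 : measurable_fun setT (fun x => lam%:E * (dX x (B lam k k x))%:E).
    apply/measurable_EFinP; apply: measurable_funM; first exact: measurable_cst.
    exact: (mcomp dX_cont mid (mB lam lam0 k k)).
  have D2 : forall x, setT x -> 0 <= lam%:E * (dX x (B lam k k x))%:E.
    by move=> x _; rewrite -EFinM lee_fin mulr_ge0 // dX_ge0.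
  rewrite -(ge0_integralD PX measurableT (fun x _ => g0 k x I) (mg k) D2 mD2).
  by apply: eq_integral => x _; rewrite -EFinM -EFinD /vk /phi subrK.
rewrite GE -CE EFinD EFinM (fineK Cfin).
by rewrite lteD2rE // fin_numM //.
Qed.

Lemma id_coupling : exists Pi0, coupling Pi0 /\ Cst Pi0 = 0 /\ Gst Pi0 = 0.
Proof.
have [Pi [cP HP]] := @push id mid.
exists Pi; split => //; split.
- rewrite /Cst HP; [|exact: dX_cont|exact: dX_ge0].
  by under eq_integral do rewrite dXxx; rewrite integral0.
- rewrite /Gst HP; [|exact: gg_cont|exact: gg_ge0].
  by under eq_integral do rewrite gg_xx; rewrite integral0.
Qed.

Lemma mix_coupling (P1 P2 : probability (X * X)%type R) (a : R) :
  (0 <= a)%R -> (a <= 1)%R -> coupling P1 -> coupling P2 ->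
  exists Pm, coupling Pm /\
    Cst Pm = a%:E * Cst P1 + (1 - a)%R%:E * Cst P2 /\
    Gst Pm = a%:E * Gst P1 + (1 - a)%R%:E * Gst P2.
Proof.
move=> a0 a1 c1 c2; have [Pm [HA HI]] := @mixture R _ (X * X)%type P1 P2 a a0 a1.
exists Pm; split; [|split].
- move=> A mA; rewrite HA; last exact: measurableX.
  rewrite c1 // c2 // -ge0_muleDl ?lee_fin ?subr_ge0 //.
  by rewrite -EFinD addrC subrK mul1e.
- rewrite /Cst HI //; first exact: m2E dX_cont.
  by move=> z; rewrite lee_fin dX_ge0.
- rewrite /Gst HI //; first exact: m2E gg_cont.
  by move=> z; rewrite lee_fin gg_ge0.
Qed.

Context (eps : R) (heps : (0 < eps)%R).

Let S := fair_regularizer dX dY PX eps h.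

Lemma feas_le Pi : coupling Pi -> Cst Pi <= eps%:E -> Gst Pi <= S.
Proof. by move=> cP hC; apply: ereal_sup_ubound; exists Pi. Qed.

Lemma S_ge0 : 0 <= S.
Proof.
have [Pi0 [c0 [C0 G0]]] := id_coupling.
by rewrite -G0; apply: feas_le => //; rewrite C0 lee_fin ltW.
Qed.


Lemma fin_G (v : R) (hS : S = v%:E) Pi c : coupling Pi -> Cst Pi = c%:E ->
  Gst Pi \is a fin_num.
Proof.
move=> cP hC; have c0 : (0 <= c)%R by rewrite -lee_fin -hC Cst_ge0.
rewrite ge0_fin_numE ?Gst_ge0 // ltey; apply/negP => /eqP Ginf.
have ce0 : (0 < c + eps)%R by rewrite ltr_wpDl.
pose a := (eps / (c + eps))%R.
have a0 : (0 < a)%R by rewrite divr_gt0.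
have a1 : (a <= 1)%R by rewrite ler_pdivrMr // mul1r lerDr.
have [Pi0 [c00 [C0 G0]]] := id_coupling.
have [Pm [cm [CE GE]]] := mix_coupling Pi Pi0 a (ltW a0) a1 cP c00.
have : Gst Pm <= S.
  apply: feas_le => //; rewrite CE hC C0 mule0 adde0 -EFinM lee_fin.
  rewrite /a mulrAC ler_pdivrMr //; nra.
by rewrite GE Ginf G0 mule0 adde0 gt0_muley ?lte_fin // hS leNgt ltry.
Qed.

Lemma slope (v : R) (hS : S = v%:E) p q cp cq gp gq :
  coupling p -> coupling q -> Cst p = cp%:E -> Cst q = cq%:E ->
  Gst p = gp%:E -> Gst q = gq%:E -> (cq < eps)%R -> (eps < cp)%R ->
  ((gp - v) * (eps - cq) <= (v - gq) * (cp - eps))%R.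
Proof.
move=> cp_ cq_ Cp Cq Gp Gq h1 h2.
have d0 : (0 < cp - cq)%R by rewrite subr_gt0 (lt_trans h1 h2).
pose a := ((eps - cq) / (cp - cq))%R.
have a0 : (0 <= a)%R by apply: divr_ge0; [rewrite subr_ge0; exact: ltW | exact: ltW].
have a1 : (a <= 1)%R by rewrite ler_pdivrMr // mul1r lerD2r; exact: ltW.
have [Pm [cm [CE GE]]] := mix_coupling p q a a0 a1 cp_ cq_.
have : Gst Pm <= S.
  apply: feas_le => //; rewrite CE Cp Cq -!EFinM -EFinD lee_fin.
  rewrite le_eqVlt; apply/orP; left; apply/eqP; rewrite /a.
  field; exact: lt0r_neq0.
rewrite GE Gp Gq hS -!EFinM -EFinD lee_fin => H.
have E : (a * gp + (1 - a) * gq = ((eps - cq) * gp + (cp - eps) * gq) / (cp - cq))%R.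
  rewrite /a; field; exact: lt0r_neq0.
move: H; rewrite E ler_pdivrMr // => H; nra.
Qed.

Lemma aux_contra (v lam c g : R) :
  (v - lam * eps + lam * c < g)%R -> (g - lam * (c - eps) <= v)%R -> False.
Proof. move=> H1 H2; nra. Qed.

Lemma strong : S != +oo -> exists2 lam : R, (0 <= lam)%R &
  (lam * eps)%:E + \int[PX]_x r_lambda dX dY h lam x <= S.
Proof.
move=> Sfin; have S0 := S_ge0.
pose v := fine S.
have hS : S = v%:E by rewrite /v fineK // ge0_fin_numE // ltey.
have v0 : (0 <= v)%R by rewrite -lee_fin -hS.
have [Pi0 [c00 [C0 G0]]] := id_coupling.
have C0' : Cst Pi0 = (0%R)%:E by [].
have G0' : Gst Pi0 = (0%R)%:E by [].
pose Sset : set R := [set t | t = 0%R \/ exists p cp gp,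
  [/\ coupling p, Cst p = cp%:E, Gst p = gp%:E, (eps < cp)%R &
      t = ((gp - v) / (cp - eps))%R]].
have ub : ubound Sset (v / eps)%R.
  move=> t [->|[p [cp [gp [cpp Cp Gp ecp ->]]]]]; first exact: divr_ge0 v0 (ltW heps).
  have := @slope v hS _ _ _ _ _ _ cpp c00 Cp C0' Gp G0' heps ecp; rewrite !subr0 => H.
  rewrite ler_pdivrMr ?subr_gt0 // mulrAC ler_pdivlMr //; nra.
have hsup : has_sup Sset by split; [exists 0%R; left | exists (v / eps)%R].
pose lam := sup Sset.
have lam0 : (0 <= lam)%R by apply: sup_upper_bound => //; left.
have key Pi c g : coupling Pi -> Cst Pi = c%:E -> Gst Pi = g%:E ->
    (g - lam * (c - eps) <= v)%R.
  move=> cP Cc Gg; case: (ltP eps c) => [ec|ce].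
    have : ((g - v) / (c - eps) <= lam)%R.
      by apply: sup_upper_bound => //; right; exists Pi, c, g.
    rewrite ler_pdivrMr ?subr_gt0 // => H; nra.
  have gv : (g <= v)%R.
    by rewrite -lee_fin -Gg -hS; apply: feas_le => //; rewrite Cc lee_fin.
  case: (ltP c eps) => [ce'|ec'].
    have : (lam <= (v - g) / (eps - c))%R.
      apply: ge_sup; first by exists 0%R; left.
      move=> t [->|[p [cp [gp [cpp Cp Gp ecp ->]]]]].
        by apply: divr_ge0; [rewrite subr_ge0 | rewrite subr_ge0 ltW].
      have := @slope v hS _ _ _ _ _ _ cpp cP Cp Cc Gp Gg ce' ecp => H.
      rewrite ler_pdivrMr ?subr_gt0 // mulrAC ler_pdivlMr ?subr_gt0 //; nra.
    rewrite ler_pdivlMr ?subr_gt0 // => H; nra.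
  have -> : c = eps by apply/eqP; rewrite eq_le ce ec'.
  by rewrite subrr mulr0 subr0.
exists lam => //; rewrite leNgt; apply/negP => H.
have hw : (v - lam * eps)%:E < \int[PX]_x r_lambda dX dY h lam x.
  move: H; rewrite hS; case: (\int[PX]_x r_lambda dX dY h lam x) => [r| |].
  - by rewrite -EFinD !lte_fin => H; lra.
  - move=> _; exact: ltry.
  - by [].
have [Pi [cP [c [Cc Hg]]]] := @sel lam lam0 _ hw.
have Gfin := @fin_G v hS _ _ cP Cc.
have Gg : Gst Pi = (fine (Gst Pi))%:E by rewrite fineK.
have := key Pi c (fine (Gst Pi)) cP Cc Gg.
move=> H2; move: Hg; rewrite Gg lte_fin => Hg.
exact: (aux_contra _ _ _ _ Hg H2).
Qed.

Lemma main_eq : S = ereal_inf [set ((lam * eps)%:E +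
     \int[PX]_x r_lambda dX dY h lam x)%E | lam in [set lam : R | (0 <= lam)%R]].
Proof.
apply/eqP; rewrite eq_le; apply/andP; split.
  apply: le_ereal_inf_tmp => _ [lam lam0 <-].
  apply: ge_ereal_sup => _ [Pi [hC cP ->]].
  apply: le_trans (@weak _ _ lam0 cP) _.
  rewrite EFinM; apply: leeD2r; apply: lee_wpmul2l; last exact: hC.
  by rewrite lee_fin.
case: (eqVneq S +oo) => [->|Sfin]; first exact: leey.
have [lam lam0 H] := strong Sfin; apply: le_trans H.
by apply: ereal_inf_lbound; exists lam.
Qed.
End Couplings. End WithDense. End Proof2p3.

Theorem theorem2p3 (R : realType) (dd : measure_display) (X : measurableType dd)
  (Y : Type) (dX : X -> X -> R) (dY : Y -> Y -> R)
  (hdX : is_metric dX) (hcX : metric_complete dX) (hsX : metric_separable dX)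
  (hdY : is_metric dY) (hcY : metric_complete dY) (hsY : metric_separable dY)
  (hBorel : (@measurable dd X) = <<s metric_open dX >>)
  (PX : probability X R) (eps : R) (heps : 0 < eps) (h : X -> Y)
  (hcont : forall lam : R, 0 <= lam ->
     metric_continuous2 dX (fun x x' => dY (h x) (h x') - lam * dX x x')) :
  fair_regularizer dX dY PX eps h =
  ereal_inf [set ((lam * eps)%:E + \int[PX]_x r_lambda dX dY h lam x)%E
            | lam in [set lam : R | 0 <= lam]].
Proof.
have [dn hdn] := @dense_seq R dd X dX hsX.
exact: (@main_eq R dd X Y dX dY hdX hdY hBorel h PX hcont dn hdn eps heps).
Qed.
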